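(* Let $\alpha,\beta\in(0,1]$, and let $L(t,u,v,w):\mathbb{T}^\kappa\times\mathbb{R}^3\to\mathbb{R}$ have continuous second-order partial derivatives in $(u,v,w)$. Consider the problem $$\mathcal{L}(y)=\int_a^bL\bigl(t,y(\sigma(t)),({}_a\Delta_h^\alpha y)(t),({}_h\Delta_b^\beta y)(t)\bigr)\Delta t\to\min,\qquad y(a)=A,\ y(b)=B,$$ over $y:\mathbb{T}\to\mathbb{R}$. If $\hat y$ is a local minimizer, then for all $t\in\mathbb{T}^{\kappa^2}$, $$L_u[\hat y](t)+\bigl({}_h\Delta_{\rho(b)}^{\alpha}L_v[\hat y]\bigr)(t)+\bigl({}_a\Delta_h^{\beta}L_w[\hat y]\bigr)(t)=0,$$ where $[y](s)=(s,y(\sigma(s)),({}_a\Delta_h^\alpha y)(s),({}_h\Delta_b^\beta y)(s))$ and $L_v[\hat y]$, $L_w[\hat y]$ are the functions $s\mapsto L_v([\hat y](s))$, $s\mapsto L_w([\hat y](s))$ on $\mathbb{T}^\kappa$.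
   Context: Let $a\in\mathbb{R}$, $h>0$, $b=a+kh$ with $k\in\mathbb{N}$, $k\ge2$, $\mathbb{T}=\{a,a+h,\dots,b\}$, $\mathbb{T}^\kappa=\mathbb{T}\setminus\{b\}$, $\mathbb{T}^{\kappa^2}=\mathbb{T}\setminus\{b-h,b\}$, $\sigma(t)=t+h$, $\rho(t)=t-h$, $G^\Delta(t)=(G(t+h)-G(t))/h$; $\int_c^dG(s)\Delta s:=h\sum_{j=0}^{(d-c)/h-1}G(c+jh)$ for $c\le d$. $h$-factorial: $x_h^{(y)}:=h^y\Gamma(\frac{x}{h}+1)/\Gamma(\frac{x}{h}+1-y)$ (division at a pole yields zero). For $\nu\ge0$, $c\in\mathbb{T}$, $G$ on $\{s\in\mathbb{T}:s\le c\}$, $t\le c$: $({}_a\Delta_h^{-\nu}G)(t+\nu h):=h^\nu G(t)+\frac{\nu}{\Gamma(\nu+1)}\int_a^t(t+\nu h-\sigma(s))_h^{(\nu-1)}G(s)\Delta s$ and $({}_h\Delta_c^{-\nu}G)(t-\nu h):=h^\nu G(t)+\frac{\nu}{\Gamma(\nu+1)}\int_{\sigma(t)}^{\sigma(c)}(s+\nu h-\sigma(t))_h^{(\nu-1)}G(s)\Delta s$. For $0<\alpha\le1$, $\gamma=1-\alpha$, $t<c$: $({}_a\Delta_h^{\alpha}G)(t):=[\tau\mapsto({}_a\Delta_h^{-\gamma}G)(\tau+\gamma h)]^\Delta(t)$, $({}_h\Delta_c^{\alpha}G)(t):=-[\tau\mapsto({}_h\Delta_c^{-\gamma}G)(\tau-\gamma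 h)]^\Delta(t)$. Norm: $\|y\|=\max_{t\in\mathbb{T}^\kappa}|y(\sigma(t))|+\max_{t\in\mathbb{T}^\kappa}|({}_a\Delta_h^\alpha y)(t)|+\max_{t\in\mathbb{T}^\kappa}|({}_h\Delta_b^\beta y)(t)|$. $\hat y$ with $\hat y(a)=A$, $\hat y(b)=B$ is a local minimizer if for some $\delta>0$, $\mathcal{L}(\hat y)\le\mathcal{L}(y)$ for all $y$ with $y(a)=A$, $y(b)=B$, $\|y-\hat y\|<\delta$. *)

(* Defs.v *)
From Stdlib Require Import Reals Lra ZArith ClassicalEpsilon.
Open Scope R_scope.

Fixpoint rsum (n : nat) (f : nat -> R) : R :=
  match n with O => 0 | S m => rsum m f + f m end.
Fixpoint rprod (n : nat) (f : nat -> R) : R :=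
  match n with O => 1 | S m => rprod m f * f m end.
Fixpoint rmaxabs (n : nat) (f : nat -> R) : R :=
  match n with O => 0 | S m => Rmax (rmaxabs m f) (Rabs (f m)) end.

(* ---------- Euler Gamma function (Gauss limit formula) ----------
   Gamma x = lim_n n! n^x / (x (x+1) ... (x+n)), which converges for every
   x that is not a non-positive integer. *)
Definition gauss_seq (x : R) (n : nat) : R :=
  INR (fact n) * Rpower (INR n) x / rprod (S n) (fun j => x + INR j).
Definition Gamma (x : R) : R :=
  epsilon (inhabits 0) (fun l => Un_cv (gauss_seq x) l).

(* ---------- h-factorial ----------
   x_h^(y) = h^y Gamma(x/h+1) / Gamma(x/h+1-y); zero when x/h+1-y is a pole
   (a non-positive integer) of Gamma. *)
Definition hfact (h x y : R) : R :=
  if excluded_middle_informative (exists m : nat, x / h + 1 - y = - INR m)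
  then 0
  else Rpower h y * Gamma (x / h + 1) / Gamma (x / h + 1 - y).

(* ---------- delta integral on hZ ----------
   int_c^d G(s) Δs = h * sum_{j=0}^{(d-c)/h - 1} G(c + j h)   (c <= d on the lattice) *)
Definition nsteps (h c d : R) : nat := Z.to_nat (Int_part ((d - c) / h)).
Definition dint (h c d : R) (G : R -> R) : R :=
  h * rsum (nsteps h c d) (fun j => G (c + INR j * h)).

(* ---------- fractional sums ----------
   lsum a h nu G t  :=  (_a Δ_h^{-nu} G)(t + nu h)
   rsum_c c h nu G t :=  (_h Δ_c^{-nu} G)(t - nu h) *)
Definition lfsum (a h nu : R) (G : R -> R) (t : R) : R :=
  Rpower h nu * G t
  + nu / Gamma (nu + 1) *
    dint h a t (fun s => hfact h (t + nu * h - (s + h)) (nu - 1) * G s).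
Definition rfsum (c h nu : R) (G : R -> R) (t : R) : R :=
  Rpower h nu * G t
  + nu / Gamma (nu + 1) *
    dint h (t + h) (c + h) (fun s => hfact h (s + nu * h - (t + h)) (nu - 1) * G s).

(* ---------- fractional differences (0 < alpha <= 1, gamma = 1 - alpha) ---------- *)
(* left:  (_a Δ_h^alpha G)(t) = [tau |-> (_aΔ_h^{-gamma} G)(tau + gamma h)]^Δ(t) *)
Definition ldiff (a h alpha : R) (G : R -> R) (t : R) : R :=
  (lfsum a h (1 - alpha) G (t + h) - lfsum a h (1 - alpha) G t) / h.
(* right: (_h Δ_c^alpha G)(t) = - [tau |-> (_hΔ_c^{-gamma} G)(tau - gamma h)]^Δ(t) *)
Definition rdiff (c h alpha : R) (G : R -> R) (t : R) : R :=
  - ((rfsum c h (1 - alpha) G (t + h) - rfsum c h (1 - alpha) G t) / h).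

(* ---------- the functional and the norm ----------
   T = {a, a+h, ..., b}, b = a + k h;  T^kappa = {a + i h : i < k}. *)
Definition functionalL (a h : R) (k : nat) (alpha beta : R)
    (L : R -> R -> R -> R -> R) (y : R -> R) : R :=
  let b := a + INR k * h in
  dint h a b (fun t => L t (y (t + h)) (ldiff a h alpha y t) (rdiff b h beta y t)).

Definition normT (a h : R) (k : nat) (alpha beta : R) (y : R -> R) : R :=
  let b := a + INR k * h in
  rmaxabs k (fun i => y (a + INR i * h + h))
  + rmaxabs k (fun i => ldiff a h alpha y (a + INR i * h))
  + rmaxabs k (fun i => rdiff b h beta y (a + INR i * h)).

Definition local_minimizer (a h : R) (k : nat) (alpha beta A B : R)
    (L : R -> R -> R -> R -> R) (yh : R -> R) : Prop :=
  let b := a + INR k * h in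
  yh a = A /\ yh b = B /\
  exists delta, delta > 0 /\
    forall y : R -> R, y a = A -> y b = B ->
      normT a h k alpha beta (fun s => y s - yh s) < delta ->
      functionalL a h k alpha beta L yh <= functionalL a h k alpha beta L y.

Definition has_partials3 (F Fu Fv Fw : R -> R -> R -> R) : Prop :=
  forall u v w,
    derivable_pt_lim (fun x => F x v w) u (Fu u v w) /\
    derivable_pt_lim (fun x => F u x w) v (Fv u v w) /\
    derivable_pt_lim (fun x => F u v x) w (Fw u v w).

Definition continuous3 (F : R -> R -> R -> R) : Prop :=
  forall u v w eps, eps > 0 -> exists d, d > 0 /\
    forall u' v' w', Rabs (u' - u) < d -> Rabs (v' - v) < d -> Rabs (w' - w) < d ->
      Rabs (F u' v' w' - F u v w) < eps.

Definition C2_3 (F Fu Fv Fw : R -> R -> R -> R) : Prop :=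
  has_partials3 F Fu Fv Fw /\
  forall G, (G = Fu \/ G = Fv \/ G = Fw) ->
    exists Gu Gv Gw, has_partials3 G Gu Gv Gw /\
      continuous3 Gu /\ continuous3 Gv /\ continuous3 Gw.

(* Main.v *)
Require Import Defs.
From Stdlib Require Import Reals Lra Lia ZArith FunctionalExtensionality.
Open Scope R_scope.

Lemma rsum_ext n f g : (forall j, (j < n)%nat -> f j = g j) -> rsum n f = rsum n g.
Proof. induction n; simpl; intros H; auto. rewrite IHn by (intros; apply H; lia). rewrite H by lia. auto. Qed.
Lemma rsum_lin2 n p f g e : rsum n (fun j => p j * (f j + e * g j)) = rsum n (fun j => p j * f j) + e * rsum n (fun j => p j * g j).
Proof. induction n; simpl; [ring| rewrite IHn; ring]. Qed.
Lemma rsum_scal2 n p g e : rsum n (fun j => p j * (e * g j)) = e * rsum n (fun j => p j * g j).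
Proof. induction n; simpl; [ring| rewrite IHn; ring]. Qed.
Lemma rsum_plus3 n f g r : rsum n (fun j => f j + g j + r j) = rsum n f + rsum n g + rsum n r.
Proof. induction n; simpl; [ring| rewrite IHn; ring]. Qed.
Lemma rsum_comb n f g c : rsum n (fun j => c * (f j - g j)) = c * (rsum n f - rsum n g).
Proof. induction n; simpl; [ring| rewrite IHn; ring]. Qed.
Lemma rsum_scal n f c : rsum n (fun j => c * f j) = c * rsum n f.
Proof. induction n; simpl; [ring| rewrite IHn; ring]. Qed.
Lemma rsum_zero n f : (forall j, (j<n)%nat -> f j = 0) -> rsum n f = 0.
Proof. intros H. rewrite (rsum_ext n f (fun _ => 0)) by auto. induction n; simpl; [ring| rewrite IHn; [ring|intros; apply H; lia]]. Qed.
Lemma rsum_split m p f : rsum (m + p) f = rsum m f + rsum p (fun i => f (m + i)%nat).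
Proof. induction p; simpl; [rewrite Nat.add_0_r; ring|]. rewrite Nat.add_succ_r. simpl. rewrite IHp. ring. Qed.
Lemma rsum_delta N q f : (q < N)%nat -> rsum N (fun s => f s * (if Nat.eq_dec s q then 1 else 0)) = f q.
Proof.
  intros H; induction N; [lia|]. simpl. destruct (Nat.eq_dec N q).
  - subst. rewrite rsum_zero; [ring|]. intros j Hj; destruct (Nat.eq_dec j q); [lia|ring].
  - rewrite IHN by lia; ring.
Qed.

Lemma nsteps_lat h x y m : h > 0 -> y - x = INR m * h -> nsteps h x y = m.
Proof. intros Hh E. unfold nsteps. replace ((y-x)/h) with (INR m) by (rewrite E; field; lra).
  unfold Int_part. rewrite <- (tech_up (INR m) (Z.of_nat m + 1)).
  - replace (Z.of_nat m + 1 - 1)%Z with (Z.of_nat m) by ring. apply Nat2Z.id.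
  - rewrite plus_IZR, <- INR_IZR_INZ. simpl. lra.
  - rewrite plus_IZR, <- INR_IZR_INZ. simpl. lra.
Qed.

Definition Psi (h nu : R) (n j : nat) : R :=
  if Nat.eq_dec n j then Rpower h nu
  else if lt_dec j n then nu / Gamma (nu + 1) * h * hfact h ((INR n - INR j - 1 + nu) * h) (nu - 1)
  else 0.
Lemma Psi_shift h nu n j : Psi h nu (S n) (S j) = Psi h nu n j.
Proof. unfold Psi. destruct (Nat.eq_dec (S n) (S j)); destruct (Nat.eq_dec n j); try lia; auto.
  destruct (lt_dec (S j) (S n)); destruct (lt_dec j n); try lia; auto.
  rewrite !S_INR. replace (INR n + 1 - (INR j + 1) - 1 + nu) with (INR n - INR j - 1 + nu) by ring. auto. Qed.

Lemma lfsum_lat a h nu G n N : h > 0 -> (n < N)%nat ->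
  lfsum a h nu G (a + INR n * h) = rsum N (fun j => Psi h nu n j * G (a + INR j * h)).
Proof.
  intros Hh HN. unfold lfsum, dint.
  rewrite (nsteps_lat h a (a + INR n * h) n) by (auto; ring).
  replace N with (S n + (N - S n))%nat by lia.
  rewrite rsum_split. rewrite (rsum_zero (N - S n)).
  2:{ intros j Hj. unfold Psi. destruct (Nat.eq_dec n (S n + j)); [lia|]. destruct (lt_dec (S n + j) n); [lia|]. ring. }
  change (rsum (S n) ?f) with (rsum n f + f n).
  rewrite (rsum_ext n (fun j => Psi h nu n j * G (a + INR j * h)) (fun j => (nu / Gamma (nu+1) * h) * (hfact h (a + INR n * h + nu * h - (a + INR j * h + h)) (nu - 1) * G (a + INR j * h)))).
  2:{ intros j Hj; unfold Psi; destruct (Nat.eq_dec n j); [lia|]; destruct (lt_dec j n); [|lia].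
      replace ((INR n - INR j - 1 + nu) * h) with (a + INR n * h + nu * h - (a + INR j * h + h)) by ring. ring. }
  cbv beta. replace (Psi h nu n n) with (Rpower h nu) by (unfold Psi; destruct (Nat.eq_dec n n); [auto|lia]).
  rewrite rsum_scal. ring.
Qed.

Lemma rfsum_lat a h nu c G n M : h > 0 -> c + h = a + INR M * h -> (n < M)%nat ->
  rfsum c h nu G (a + INR n * h) = rsum M (fun s => Psi h nu s n * G (a + INR s * h)).
Proof.
  intros Hh Hc HM. unfold rfsum, dint.
  rewrite (nsteps_lat h (a + INR n * h + h) (c + h) (M - S n)).
  2: auto.
  2:{ rewrite Hc, minus_INR by lia. rewrite S_INR. ring. }
  replace M with (S n + (M - S n))%nat at 2 by lia.
  rewrite rsum_split.
  change (rsum (S n) ?f) with (rsum n f + f n).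
  rewrite (rsum_zero n).
  2:{ intros j Hj. unfold Psi. destruct (Nat.eq_dec j n); [lia|]. destruct (lt_dec n j); [lia|]. ring. }
  cbv beta. replace (Psi h nu n n) with (Rpower h nu) by (unfold Psi; destruct (Nat.eq_dec n n); [auto|lia]).
  rewrite (rsum_ext (M - S n) (fun i => Psi h nu (S n + i) n * G (a + INR (S n + i) * h))
     (fun i => (nu / Gamma (nu+1) * h) * (hfact h (a + INR n * h + h + INR i * h + nu * h - (a + INR n * h + h)) (nu - 1) * G (a + INR n * h + h + INR i * h)))).
  2:{ intros j Hj. unfold Psi. destruct (Nat.eq_dec (S n + j) n); [lia|]. destruct (lt_dec n (S n + j)); [|lia].
      rewrite plus_INR, S_INR.
      replace ((INR n + 1 + INR j - INR n - 1 + nu) * h) with (a + INR n * h + h + INR j * h + nu * h - (a + INR n * h + h)) by ring.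
      replace (a + (INR n + 1 + INR j) * h) with (a + INR n * h + h + INR j * h) by ring. ring. }
  rewrite rsum_scal. ring.
Qed.

Lemma ldiff_lat a h al G n N : h > 0 -> (S n < N)%nat ->
  ldiff a h al G (a + INR n * h) = (rsum N (fun j => Psi h (1-al) (S n) j * G (a + INR j * h))
     - rsum N (fun j => Psi h (1-al) n j * G (a + INR j * h))) / h.
Proof.
  intros Hh HN. unfold ldiff.
  replace (a + INR n * h + h) with (a + INR (S n) * h) by (rewrite S_INR; ring).
  rewrite !(lfsum_lat a h (1-al) G _ N) by (auto; lia). auto.
Qed.

Lemma rdiff_lat a h al c G n M : h > 0 -> c + h = a + INR M * h -> (S n < M)%nat ->
  rdiff c h al G (a + INR n * h) = - ((rsum M (fun s => Psi h (1-al) s (S n) * G (a + INR s * h))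
     - rsum M (fun s => Psi h (1-al) s n * G (a + INR s * h))) / h).
Proof.
  intros Hh Hc HN. unfold rdiff.
  replace (a + INR n * h + h) with (a + INR (S n) * h) by (rewrite S_INR; ring).
  rewrite !(rfsum_lat a h (1-al) c G _ M) by (auto; lia). auto.
Qed.

Definition etaf (a h : R) (q : nat) (s : R) : R := if Req_EM_T s (a + INR q * h) then 1 else 0.

Lemma eta_pt a h q x : h > 0 -> etaf a h q (a + INR x * h) = if Nat.eq_dec x q then 1 else 0.
Proof.
  intros Hh. unfold etaf. destruct (Req_EM_T _ _) as [E|E]; destruct (Nat.eq_dec x q) as [e|e]; auto.
  - exfalso. apply e. apply INR_eq. apply Rmult_eq_reg_r with h; lra.
  - subst. lra.
Qed.

Lemma sum_eta a h q N f : h > 0 -> (q < N)%nat ->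
  rsum N (fun s => f s * etaf a h q (a + INR s * h)) = f q.
Proof.
  intros Hh Hq. rewrite (rsum_ext N _ (fun s => f s * (if Nat.eq_dec s q then 1 else 0))).
  - apply rsum_delta; auto.
  - intros j _. rewrite eta_pt; auto.
Qed.

Lemma ldiff_eta a h al q j : h > 0 ->
  ldiff a h al (etaf a h q) (a + INR j * h) = (Psi h (1-al) (S j) q - Psi h (1-al) j q) / h.
Proof.
  intros Hh. rewrite (ldiff_lat a h al _ j (S (S j) + q)) by (auto; lia).
  rewrite !sum_eta by (auto; lia). auto.
Qed.

Lemma rdiff_eta a h al c M q j : h > 0 -> c + h = a + INR M * h -> (S j < M)%nat -> (q < M)%nat ->
  rdiff c h al (etaf a h q) (a + INR j * h) = - ((Psi h (1-al) q (S j) - Psi h (1-al) q j) / h).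
Proof.
  intros Hh Hc H1 H2. rewrite (rdiff_lat a h al c _ j M) by auto.
  rewrite !sum_eta by (auto; lia). auto.
Qed.

Lemma I1 a h k m Uf : h > 0 -> (m < k)%nat ->
  rsum k (fun j => etaf a h (S m) (a + INR j * h + h) * Uf (a + INR j * h)) = Uf (a + INR m * h).
Proof.
  intros Hh Hm.
  rewrite (rsum_ext k _ (fun j => Uf (a + INR j * h) * (if Nat.eq_dec j m then 1 else 0))).
  - apply (rsum_delta k m (fun j => Uf (a + INR j * h))); auto.
  - intros j _. replace (a + INR j * h + h) with (a + INR (S j) * h) by (rewrite S_INR; ring).
    rewrite eta_pt by auto. destruct (Nat.eq_dec (S j) (S m)); destruct (Nat.eq_dec j m); try lia; ring.
Qed.

Lemma I2 a h k al m Vf : h > 0 -> (S m < k)%nat ->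
  rsum k (fun j => ldiff a h al (etaf a h (S m)) (a + INR j * h) * Vf (a + INR j * h))
  = rdiff (a + INR k * h - h) h al Vf (a + INR m * h).
Proof.
  intros Hh Hm. rewrite (rdiff_lat a h al _ Vf m k) by (auto; ring).
  rewrite (rsum_ext k _ (fun j => / h * (Psi h (1-al) j m * Vf (a + INR j * h) - Psi h (1-al) j (S m) * Vf (a + INR j * h)))).
  - rewrite rsum_comb. unfold Rdiv. ring.
  - intros j _. rewrite ldiff_eta by auto. rewrite Psi_shift. unfold Rdiv. ring.
Qed.

Lemma I3 a h k be m Wf : h > 0 -> (S m < k)%nat ->
  rsum k (fun j => rdiff (a + INR k * h) h be (etaf a h (S m)) (a + INR j * h) * Wf (a + INR j * h))
  = ldiff a h be Wf (a + INR m * h).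
Proof.
  intros Hh Hm. rewrite (ldiff_lat a h be Wf m k) by auto.
  rewrite (rsum_ext k _ (fun j => / h * (Psi h (1-be) (S m) j * Wf (a + INR j * h) - Psi h (1-be) m j * Wf (a + INR j * h)))).
  - rewrite rsum_comb. unfold Rdiv. ring.
  - intros j Hj. rewrite (rdiff_eta a h be _ (S k)) by (auto; try lia; rewrite S_INR; ring).
    rewrite Psi_shift. unfold Rdiv. ring.
Qed.
Ltac absr := unfold Rabs in *; repeat destruct Rcase_abs; lra.

Lemma mvt_any f f' x y : (forall c, derivable_pt_lim f c (f' c)) ->
  exists c, Rabs (c - x) <= Rabs (y - x) /\ f y - f x = f' c * (y - x).
Proof.
  intros Hd. destruct (Rtotal_order x y) as [Hlt|[Heq|Hgt]].
  - destruct (MVT_cor2 f f' x y Hlt (fun c _ => Hd c)) as [c [E Hc]].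
    exists c. split; [absr | lra].
  - subst. exists y. split; [absr| ring].
  - destruct (MVT_cor2 f f' y x Hgt (fun c _ => Hd c)) as [c [E Hc]].
    exists c. split; [absr| lra].
Qed.

Lemma partial_small f x l : derivable_pt_lim f x l -> forall eps, eps > 0 -> exists d, d > 0 /\
  forall hh, Rabs hh < d -> Rabs (f (x + hh) - f x - hh * l) <= eps * Rabs hh.
Proof.
  intros Hd eps He. destruct (Hd eps He) as [d Hdd]. exists d. split; [apply cond_pos|].
  intros hh Hh. destruct (Req_dec hh 0) as [->|Hn].
  - rewrite Rplus_0_r. replace (f x - f x - 0 * l) with 0 by ring. rewrite Rabs_R0. lra.
  - replace (f (x + hh) - f x - hh * l) with (hh * ((f (x + hh) - f x) / hh - l)) by (field; auto).
    rewrite Rabs_mult. rewrite Rmult_comm. apply Rmult_le_compat_r; [apply Rabs_pos|].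
    left. apply Hdd; auto.
Qed.

Lemma bound_prod x y X Y : Rabs x <= X -> Rabs y <= Y -> Rabs (x * y) <= X * Y.
Proof. intros. rewrite Rabs_mult. apply Rmult_le_compat; auto; apply Rabs_pos. Qed.

Lemma cont_of_partials G Gu Gv Gw : has_partials3 G Gu Gv Gw -> continuous3 Gu -> continuous3 Gv -> continuous3 Gw -> continuous3 G.
Proof.
  intros HP Cu Cv Cw u v w eps He.
  destruct (Cu u v w 1 Rlt_0_1) as [d1 [Hd1 B1]].
  destruct (Cv u v w 1 Rlt_0_1) as [d2 [Hd2 B2]].
  destruct (Cw u v w 1 Rlt_0_1) as [d3 [Hd3 B3]].
  set (M := Rabs (Gu u v w) + Rabs (Gv u v w) + Rabs (Gw u v w) + 3).
  assert (HM : M > 0) by (unfold M; pose proof (Rabs_pos (Gu u v w)); pose proof (Rabs_pos (Gv u v w)); pose proof (Rabs_pos (Gw u v w)); lra).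
  assert (Hem : eps / M > 0) by (apply Rdiv_lt_0_compat; lra).
  exists (Rmin (Rmin d1 d2) (Rmin d3 (eps / M))).
  split. { apply Rmin_pos; apply Rmin_pos; lra. }
  intros u' v' w' Hu Hv Hw.
  pose proof (Rmin_l (Rmin d1 d2) (Rmin d3 (eps / M))) as m1.
  pose proof (Rmin_r (Rmin d1 d2) (Rmin d3 (eps / M))) as m2.
  pose proof (Rmin_l d1 d2). pose proof (Rmin_r d1 d2). pose proof (Rmin_l d3 (eps/M)). pose proof (Rmin_r d3 (eps/M)).
  destruct (mvt_any (fun x => G x v w) (fun x => Gu x v w) u u') as [c1 [Hc1 E1]]. { intro c; apply (HP c v w). }
  destruct (mvt_any (fun x => G u' x w) (fun x => Gv u' x w) v v') as [c2 [Hc2 E2]]. { intro c; apply (HP u' c w). }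
  destruct (mvt_any (fun x => G u' v' x) (fun x => Gw u' v' x) w w') as [c3 [Hc3 E3]]. { intro c; apply (HP u' v' c). }
  simpl in E1, E2, E3.
  assert (R0 : forall z, Rabs (z - z) < d1 /\ Rabs (z - z) < d2 /\ Rabs (z - z) < d3).
  { intro z. rewrite Rminus_diag, Rabs_R0. lra. }
  assert (K1 : Rabs (Gu c1 v w) <= Rabs (Gu u v w) + 1).
  { pose proof (B1 c1 v w ltac:(lra) ltac:(apply R0) ltac:(apply R0)).
    pose proof (Rabs_triang_inv (Gu c1 v w) (Gu u v w)). lra. }
  assert (K2 : Rabs (Gv u' c2 w) <= Rabs (Gv u v w) + 1).
  { pose proof (B2 u' c2 w ltac:(lra) ltac:(lra) ltac:(apply R0)).
    pose proof (Rabs_triang_inv (Gv u' c2 w) (Gv u v w)). lra. }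
  assert (K3 : Rabs (Gw u' v' c3) <= Rabs (Gw u v w) + 1).
  { pose proof (B3 u' v' c3 ltac:(lra) ltac:(lra) ltac:(lra)).
    pose proof (Rabs_triang_inv (Gw u' v' c3) (Gw u v w)). lra. }
  replace (G u' v' w' - G u v w) with ((G u' v' w' - G u' v' w) + (G u' v' w - G u' v w) + (G u' v w - G u v w)) by ring.
  rewrite E1, E2, E3.
  assert (P1 := bound_prod _ _ _ _ K1 (Rle_refl (Rabs (u' - u)))).
  assert (P2 := bound_prod _ _ _ _ K2 (Rle_refl (Rabs (v' - v)))).
  assert (P3 := bound_prod _ _ _ _ K3 (Rle_refl (Rabs (w' - w)))).
  pose proof (Rabs_triang (Gw u' v' c3 * (w' - w) + Gv u' c2 w * (v' - v)) (Gu c1 v w * (u' - u))).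
  pose proof (Rabs_triang (Gw u' v' c3 * (w' - w)) (Gv u' c2 w * (v' - v))).
  assert (Q1 : (Rabs (Gu u v w) + 1) * Rabs (u' - u) <= (Rabs (Gu u v w) + 1) * (eps / M)).
  { apply Rmult_le_compat_l; [pose proof (Rabs_pos (Gu u v w)); lra| lra]. }
  assert (Q2 : (Rabs (Gv u v w) + 1) * Rabs (v' - v) < (Rabs (Gv u v w) + 1) * (eps / M)).
  { apply Rmult_lt_compat_l; [pose proof (Rabs_pos (Gv u v w)); lra| lra]. }
  assert (Q3 : (Rabs (Gw u v w) + 1) * Rabs (w' - w) <= (Rabs (Gw u v w) + 1) * (eps / M)).
  { apply Rmult_le_compat_l; [pose proof (Rabs_pos (Gw u v w)); lra| lra]. }
  assert (Q4 : (Rabs (Gu u v w) + 1) * (eps / M) + (Rabs (Gv u v w) + 1) * (eps / M) + (Rabs (Gw u v w) + 1) * (eps / M) <= eps).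
  { replace ((Rabs (Gu u v w) + 1) * (eps / M) + (Rabs (Gv u v w) + 1) * (eps / M) + (Rabs (Gw u v w) + 1) * (eps / M)) with (M * (eps / M)) by (unfold M; ring).
    right. field. lra. }
  lra.
Qed.

Definition lin_approx (g : R -> R) (D : R) := forall eps, eps > 0 -> exists d, d > 0 /\
  forall e, Rabs e < d -> Rabs (g e - g 0 - e * D) <= eps * Rabs e.

Lemma small_mul e D S X : S > 0 -> Rabs e < D / S -> 0 <= X <= S -> D > 0 -> Rabs e * X < D.
Proof.
  intros HS He HX HD. apply Rle_lt_trans with (Rabs e * S).
  - apply Rmult_le_compat_l; [apply Rabs_pos| lra].
  - apply Rlt_le_trans with (D / S * S); [apply Rmult_lt_compat_r; lra| right; field; lra].
Qed.

Lemma dir_approx F Fu Fv Fw u v w p q r : has_partials3 F Fu Fv Fw -> continuous3 Fv -> continuous3 Fw ->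
  lin_approx (fun e => F (u + e*p) (v + e*q) (w + e*r)) (p * Fu u v w + q * Fv u v w + r * Fw u v w).
Proof.
  intros HP Cv Cw eps He.
  set (S := Rabs p + Rabs q + Rabs r + 1).
  assert (HS : S > 0) by (unfold S; pose proof (Rabs_pos p); pose proof (Rabs_pos q); pose proof (Rabs_pos r); lra).
  set (e3 := eps / S).
  assert (He3 : e3 > 0) by (apply Rdiv_lt_0_compat; lra).
  destruct (HP u v w) as [Pu _].
  destruct (partial_small _ _ _ Pu e3 He3) as [d0 [Hd0 B0]].
  destruct (Cv u v w e3 He3) as [d2 [Hd2 B2]].
  destruct (Cw u v w e3 He3) as [d3 [Hd3 B3]].
  set (D := Rmin d0 (Rmin d2 d3)).
  assert (HD : D > 0) by (unfold D; repeat apply Rmin_pos; lra).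
  assert (D0 : D <= d0) by apply Rmin_l.
  assert (D2 : D <= d2) by (unfold D; pose proof (Rmin_r d0 (Rmin d2 d3)); pose proof (Rmin_l d2 d3); lra).
  assert (D3 : D <= d3) by (unfold D; pose proof (Rmin_r d0 (Rmin d2 d3)); pose proof (Rmin_r d2 d3); lra).
  exists (D / S). split; [apply Rdiv_lt_0_compat; lra|].
  intros e He'.
  assert (Sp : 0 <= Rabs p <= S) by (unfold S; pose proof (Rabs_pos p); pose proof (Rabs_pos q); pose proof (Rabs_pos r); lra).
  assert (Sq : 0 <= Rabs q <= S) by (unfold S; pose proof (Rabs_pos p); pose proof (Rabs_pos q); pose proof (Rabs_pos r); lra).
  assert (Sr : 0 <= Rabs r <= S) by (unfold S; pose proof (Rabs_pos p); pose proof (Rabs_pos q); pose proof (Rabs_pos r); lra).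
  assert (Ep : Rabs (e * p) < D) by (rewrite Rabs_mult; apply (small_mul e D S); auto).
  assert (Eq : Rabs (e * q) < D) by (rewrite Rabs_mult; apply (small_mul e D S); auto).
  assert (Er : Rabs (e * r) < D) by (rewrite Rabs_mult; apply (small_mul e D S); auto).
  replace (u + 0 * p) with u by ring. replace (v + 0 * q) with v by ring. replace (w + 0 * r) with w by ring.
  destruct (mvt_any (fun x => F (u + e*p) x w) (fun x => Fv (u + e*p) x w) v (v + e*q)) as [c2 [Hc2 E2]].
  { intro c; apply (HP (u + e*p) c w). }
  destruct (mvt_any (fun x => F (u + e*p) (v + e*q) x) (fun x => Fw (u + e*p) (v + e*q) x) w (w + e*r)) as [c3 [Hc3 E3]].
  { intro c; apply (HP (u + e*p) (v + e*q) c). }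
  simpl in E2, E3.
  replace (v + e * q - v) with (e * q) in E2, Hc2 by ring.
  replace (w + e * r - w) with (e * r) in E3, Hc3 by ring.
  pose proof (B0 (e * p) ltac:(lra)) as T1.
  assert (T2 : Rabs (Fv (u + e * p) c2 w - Fv u v w) <= e3).
  { left. apply B2; [replace (u + e * p - u) with (e * p) by ring; lra | lra | rewrite Rminus_diag, Rabs_R0; lra]. }
  assert (T3 : Rabs (Fw (u + e * p) (v + e * q) c3 - Fw u v w) <= e3).
  { left. apply B3; [replace (u + e * p - u) with (e * p) by ring; lra | replace (v + e * q - v) with (e * q) by ring; lra | lra]. }
  replace (F (u + e * p) (v + e * q) (w + e * r) - F u v w - e * (p * Fu u v w + q * Fv u v w + r * Fw u v w))
    with ((F (u + e * p) v w - F u v w - e * p * Fu u v w)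
          + (e * q) * (Fv (u + e * p) c2 w - Fv u v w)
          + (e * r) * (Fw (u + e * p) (v + e * q) c3 - Fw u v w)).
  2:{ replace (F (u + e * p) (v + e * q) (w + e * r)) with
        ((F (u + e * p) (v + e * q) (w + e * r) - F (u + e * p) (v + e * q) w) + (F (u + e * p) (v + e * q) w - F (u + e * p) v w) + F (u + e * p) v w) by ring.
      rewrite E2, E3. ring. }
  pose proof (bound_prod _ _ _ _ (Rle_refl (Rabs (e*q))) T2).
  pose proof (bound_prod _ _ _ _ (Rle_refl (Rabs (e*r))) T3).
  pose proof (Rabs_triang ((F (u + e * p) v w - F u v w - e * p * Fu u v w) + (e * q) * (Fv (u + e * p) c2 w - Fv u v w))
      ((e * r) * (Fw (u + e * p) (v + e * q) c3 - Fw u v w))).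
  pose proof (Rabs_triang (F (u + e * p) v w - F u v w - e * p * Fu u v w) ((e * q) * (Fv (u + e * p) c2 w - Fv u v w))).
  rewrite !Rabs_mult in *.
  assert (Fin : e3 * (Rabs e * Rabs p) + Rabs e * Rabs q * e3 + Rabs e * Rabs r * e3 <= eps * Rabs e).
  { replace (e3 * (Rabs e * Rabs p) + Rabs e * Rabs q * e3 + Rabs e * Rabs r * e3) with
      (Rabs e * (e3 * (Rabs p + Rabs q + Rabs r))) by ring.
    replace (eps * Rabs e) with (Rabs e * (e3 * S)) by (unfold e3; field; lra).
    apply Rmult_le_compat_l; [apply Rabs_pos|]. apply Rmult_le_compat_l; [lra|]. unfold S; lra. }
  lra.
Qed.

Lemma lin_approx_plus f g D1 D2 : lin_approx f D1 -> lin_approx g D2 -> lin_approx (fun e => f e + g e) (D1 + D2).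
Proof.
  intros Hf Hg eps He.
  destruct (Hf (eps/2) ltac:(lra)) as [d1 [Hd1 B1]].
  destruct (Hg (eps/2) ltac:(lra)) as [d2 [Hd2 B2]].
  exists (Rmin d1 d2). split; [apply Rmin_pos; lra|]. intros e He'.
  pose proof (Rmin_l d1 d2). pose proof (Rmin_r d1 d2).
  pose proof (B1 e ltac:(lra)). pose proof (B2 e ltac:(lra)).
  replace (f e + g e - (f 0 + g 0) - e * (D1 + D2)) with ((f e - f 0 - e * D1) + (g e - g 0 - e * D2)) by ring.
  pose proof (Rabs_triang (f e - f 0 - e * D1) (g e - g 0 - e * D2)). lra.
Qed.

Lemma lin_approx_rsum n G D : (forall j, (j < n)%nat -> lin_approx (G j) (D j)) ->
  lin_approx (fun e => rsum n (fun j => G j e)) (rsum n D).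
Proof.
  induction n; intros H.
  - intros eps He. exists 1. split; [lra|]. intros e _. simpl. replace (0 - 0 - e * 0) with 0 by ring. rewrite Rabs_R0.
    pose proof (Rabs_pos e). nra.
  - simpl. apply lin_approx_plus; [apply IHn; intros; apply H; lia| apply H; lia].
Qed.

Lemma lin_approx_scal f D c : lin_approx f D -> lin_approx (fun e => c * f e) (c * D).
Proof.
  intros Hf eps He.
  destruct (Hf (eps / (Rabs c + 1))) as [d [Hd B]]. { apply Rdiv_lt_0_compat; [lra| pose proof (Rabs_pos c); lra]. }
  exists d. split; auto. intros e He'.
  replace (c * f e - c * f 0 - e * (c * D)) with (c * (f e - f 0 - e * D)) by ring.
  rewrite Rabs_mult. pose proof (B e He'). pose proof (Rabs_pos c). pose proof (Rabs_pos e).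
  apply Rle_trans with (Rabs c * (eps / (Rabs c + 1) * Rabs e)); [apply Rmult_le_compat_l; auto|].
  replace (Rabs c * (eps / (Rabs c + 1) * Rabs e)) with ((Rabs c / (Rabs c + 1)) * (eps * Rabs e)) by (field; lra).
  assert (Rabs c / (Rabs c + 1) <= 1). { apply Rmult_le_reg_r with (Rabs c + 1); [lra|]. unfold Rdiv. rewrite Rmult_assoc, Rinv_l by lra. lra. }
  assert (0 <= eps * Rabs e) by nra. nra.
Qed.

Lemma min_zero F D d0 : d0 > 0 -> (forall e, Rabs e < d0 -> F 0 <= F e) -> lin_approx F D -> D = 0.
Proof.
  intros Hd0 Hmin HL. destruct (Req_dec D 0) as [|HD]; auto. exfalso.
  assert (HaD : Rabs D > 0) by (apply Rabs_pos_lt; auto).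
  destruct (HL (Rabs D / 2) ltac:(lra)) as [d [Hd Hb]].
  set (m := Rmin d d0 / 2).
  assert (Hm : 0 < m) by (unfold m; pose proof (Rmin_pos d d0 Hd Hd0); lra).
  assert (Hm1 : m < d) by (unfold m; pose proof (Rmin_l d d0); lra).
  assert (Hm2 : m < d0) by (unfold m; pose proof (Rmin_r d d0); lra).
  destruct (Rlt_dec D 0) as [Dn|Dp].
  - assert (Ae : Rabs m = m) by (apply Rabs_right; lra).
    pose proof (Hmin m ltac:(lra)). pose proof (Hb m ltac:(lra)).
    rewrite Ae in H0. rewrite (Rabs_left D) in H0 by auto.
    pose proof (Rle_abs (F m - F 0 - m * D)). nra.
  - assert (Ae : Rabs (-m) = m) by (rewrite Rabs_Ropp; apply Rabs_right; lra).
    pose proof (Hmin (-m) ltac:(lra)). pose proof (Hb (-m) ltac:(lra)).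
    rewrite Ae in H0. rewrite (Rabs_right D) in H0 by lra.
    pose proof (Rle_abs (F (-m) - F 0 - - m * D)). assert (D > 0) by lra. nra.
Qed.

Lemma lfsum_lin a h nu f g e t : lfsum a h nu (fun s => f s + e * g s) t = lfsum a h nu f t + e * lfsum a h nu g t.
Proof. unfold lfsum, dint. rewrite rsum_lin2. ring. Qed.
Lemma rfsum_lin c h nu f g e t : rfsum c h nu (fun s => f s + e * g s) t = rfsum c h nu f t + e * rfsum c h nu g t.
Proof. unfold rfsum, dint. rewrite rsum_lin2. ring. Qed.
Lemma lfsum_scal a h nu g e t : lfsum a h nu (fun s => e * g s) t = e * lfsum a h nu g t.
Proof. unfold lfsum, dint. rewrite rsum_scal2. ring. Qed.
Lemma rfsum_scal c h nu g e t : rfsum c h nu (fun s => e * g s) t = e * rfsum c h nu g t.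
Proof. unfold rfsum, dint. rewrite rsum_scal2. ring. Qed.
Lemma ldiff_lin a h al f g e t : ldiff a h al (fun s => f s + e * g s) t = ldiff a h al f t + e * ldiff a h al g t.
Proof. unfold ldiff. rewrite !lfsum_lin. unfold Rdiv. ring. Qed.
Lemma rdiff_lin c h al f g e t : rdiff c h al (fun s => f s + e * g s) t = rdiff c h al f t + e * rdiff c h al g t.
Proof. unfold rdiff. rewrite !rfsum_lin. unfold Rdiv. ring. Qed.
Lemma ldiff_scal a h al g e t : ldiff a h al (fun s => e * g s) t = e * ldiff a h al g t.
Proof. unfold ldiff. rewrite !lfsum_scal. unfold Rdiv. ring. Qed.
Lemma rdiff_scal c h al g e t : rdiff c h al (fun s => e * g s) t = e * rdiff c h al g t.
Proof. unfold rdiff. rewrite !rfsum_scal. unfold Rdiv. ring. Qed.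

Lemma rmaxabs_scal n f e : rmaxabs n (fun i => e * f i) = Rabs e * rmaxabs n f.
Proof. induction n; simpl; [ring|]. rewrite IHn, Rabs_mult, RmaxRmult; auto. apply Rabs_pos. Qed.
Lemma rmaxabs_pos n f : 0 <= rmaxabs n f.
Proof. induction n; simpl; [lra|]. apply Rle_trans with (rmaxabs n f); auto. apply Rmax_l. Qed.

Lemma normT_scal a h k al be g e : normT a h k al be (fun s => e * g s) = Rabs e * normT a h k al be g.
Proof.
  unfold normT. cbv zeta. rewrite rmaxabs_scal.
  replace (fun i => ldiff a h al (fun s => e * g s) (a + INR i * h)) with (fun i => e * ldiff a h al g (a + INR i * h))
    by (extensionality i; symmetry; apply ldiff_scal).
  replace (fun i => rdiff (a + INR k * h) h be (fun s => e * g s) (a + INR i * h)) with (fun i => e * rdiff (a + INR k * h) h be g (a + INR i * h))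
    by (extensionality i; symmetry; apply rdiff_scal).
  rewrite !rmaxabs_scal. ring.
Qed.
Lemma normT_pos a h k al be g : 0 <= normT a h k al be g.
Proof. unfold normT. pose proof (rmaxabs_pos k (fun i => g (a + INR i * h + h))).
  pose proof (rmaxabs_pos k (fun i => ldiff a h al g (a + INR i * h))).
  pose proof (rmaxabs_pos k (fun i => rdiff (a + INR k * h) h be g (a + INR i * h))). simpl. lra. Qed.

Theorem mainTheorem11
  (a h : R) (k : nat) (alpha beta A B : R)
  (L Lu Lv Lw : R -> R -> R -> R -> R) (yh : R -> R) :
  h > 0 -> (2 <= k)%nat ->
  0 < alpha <= 1 -> 0 < beta <= 1 ->
  (forall i : nat, (i < k)%nat ->
     C2_3 (L (a + INR i * h)) (Lu (a + INR i * h)) (Lv (a + INR i * h)) (Lw (a + INR i * h))) ->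
  local_minimizer a h k alpha beta A B L yh ->
  let b := a + INR k * h in
  let ext := fun (F : R -> R -> R -> R -> R) (s : R) =>
      F s (yh (s + h)) (ldiff a h alpha yh s) (rdiff b h beta yh s) in
  forall i : nat, (i + 2 <= k)%nat ->
    let t := a + INR i * h in
    ext Lu t + rdiff (b - h) h alpha (ext Lv) t + ldiff a h beta (ext Lw) t = 0.
Proof.
  intros Hh Hk Ha Hb HC Hmin b ext i Hi t.
  destruct Hmin as [HA [HB [d0 [Hd0 Hmin]]]].
  set (eta := etaf a h (S i)).
  assert (Hea : eta a = 0).
  { unfold eta. pose proof (eta_pt a h (S i) 0 Hh) as E. simpl INR in E. rewrite Rmult_0_l, Rplus_0_r in E.
    rewrite E. destruct (Nat.eq_dec 0 (S i)); [lia|auto]. }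
  assert (Heb : eta b = 0). { unfold eta, b. rewrite eta_pt by auto. destruct (Nat.eq_dec k (S i)); [lia|auto]. }
  set (ye := fun e s => yh s + e * eta s).
  set (Fe := fun e => h * rsum k (fun j => L (a + INR j * h) (yh (a + INR j * h + h) + e * eta (a + INR j * h + h))
        (ldiff a h alpha yh (a + INR j * h) + e * ldiff a h alpha eta (a + INR j * h))
        (rdiff b h beta yh (a + INR j * h) + e * rdiff b h beta eta (a + INR j * h)))).
  assert (Hexp : forall e, functionalL a h k alpha beta L (ye e) = Fe e).
  { intros e. unfold functionalL, Fe, dint, ye. cbv zeta.
    rewrite (nsteps_lat h a (a + INR k * h) k) by (auto; ring). f_equal. apply rsum_ext; intros j Hj.
    rewrite ldiff_lin, rdiff_lin. reflexivity. }
  assert (Hyh : functionalL a h k alpha beta L yh = Fe 0).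
  { rewrite <- Hexp. f_equal. unfold ye. extensionality s; ring. }
  set (N := normT a h k alpha beta eta).
  assert (HN : 0 <= N) by apply normT_pos.
  assert (Hmin' : forall e, Rabs e < d0 / (N + 1) -> Fe 0 <= Fe e).
  { intros e He. rewrite <- Hyh, <- Hexp. apply Hmin.
    - unfold ye. rewrite Hea. lra.
    - transitivity (yh b + e * eta b); [reflexivity|]. rewrite Heb. rewrite Rmult_0_r, Rplus_0_r. exact HB.
    - replace (fun s => ye e s - yh s) with (fun s => e * eta s) by (extensionality s; unfold ye; ring).
      rewrite normT_scal. fold N. apply (small_mul e d0 (N + 1)); auto; lra. }
  assert (Happ : lin_approx Fe (h * rsum k (fun j =>
        eta (a + INR j * h + h) * ext Lu (a + INR j * h)
      + ldiff a h alpha eta (a + INR j * h) * ext Lv (a + INR j * h)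
      + rdiff b h beta eta (a + INR j * h) * ext Lw (a + INR j * h)))).
  { unfold Fe. apply lin_approx_scal.
    apply (lin_approx_rsum k (fun j e => L (a + INR j * h) (yh (a + INR j * h + h) + e * eta (a + INR j * h + h))
        (ldiff a h alpha yh (a + INR j * h) + e * ldiff a h alpha eta (a + INR j * h))
        (rdiff b h beta yh (a + INR j * h) + e * rdiff b h beta eta (a + INR j * h)))).
    intros j Hj. destruct (HC j Hj) as [HP HG].
    destruct (HG _ (or_intror (or_introl eq_refl))) as [Gu [Gv [Gw [HP' [C1 [C2 C3]]]]]].
    destruct (HG _ (or_intror (or_intror eq_refl))) as [Gu' [Gv' [Gw' [HP'' [C1' [C2' C3']]]]]].
    apply dir_approx; auto.
    - apply (cont_of_partials _ Gu Gv Gw); auto.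
    - apply (cont_of_partials _ Gu' Gv' Gw'); auto. }
  assert (HS := min_zero Fe _ (d0 / (N + 1)) ltac:(apply Rdiv_lt_0_compat; lra) Hmin' Happ).
  assert (S0 : rsum k (fun j =>
        eta (a + INR j * h + h) * ext Lu (a + INR j * h)
      + ldiff a h alpha eta (a + INR j * h) * ext Lv (a + INR j * h)
      + rdiff b h beta eta (a + INR j * h) * ext Lw (a + INR j * h)) = 0).
  { apply Rmult_eq_reg_l with h; [rewrite Rmult_0_r; exact HS| lra]. }
  rewrite rsum_plus3 in S0.
  pose proof (I1 a h k i (ext Lu) Hh ltac:(lia)) as E1.
  pose proof (I2 a h k alpha i (ext Lv) Hh ltac:(lia)) as E2.
  pose proof (I3 a h k beta i (ext Lw) Hh ltac:(lia)) as E3.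
  unfold eta in S0. fold b in E3. fold t in E1, E2, E3. fold b in E2.
  rewrite E1, E2, E3 in S0. exact S0.
Qed.
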